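(* Let $\ell \ge q \ge 1$. Let $\mathbf{z} \in \mathbb{R}^{\ell}$ (the observations), let $\boldsymbol\Gamma_q$ be a real $\ell \times q$ matrix of full column rank (the truncated basis), and let $\boldsymbol\Sigma_{\mathbf{e}}, \boldsymbol\Sigma_{\boldsymbol\eta}$ be $\ell\times\ell$ symmetric positive definite matrices (observation error and model discrepancy variances). For an input $\mathbf{x}$, let $\mathrm{E}[\mathbf{c}(\mathbf{x})] \in \mathbb{R}^q$ and let $\mathrm{Var}[\mathbf{c}(\mathbf{x})]$ be a $q\times q$ symmetric positive semidefinite matrix (emulator mean and variance of the basis coefficients), and set $\mathrm{E}[f(\mathbf{x})] = \boldsymbol\Gamma_q \mathrm{E}[\mathbf{c}(\mathbf{x})]$ and $\mathrm{Var}[f(\mathbf{x})] = \boldsymbol\Gamma_q \mathrm{Var}[\mathbf{c}(\mathbf{x})] \boldsymbol\Gamma_q^T$. Define the field implausibility $$\mathcal{I}(\mathbf{x}) = (\mathbf{z} - \mathrm{E}[f(\mathbf{x})])^{T}\big(\mathrm{Var}[f(\mathbf{x})] + \boldsymbol\Sigma_{\mathbf{e}} + \boldsymbol\Sigma_{\boldsymbol\eta}\big)^{-1} (\mathbf{z} - \mathrm{E}[f(\mathbf{x})]).$$ Let $\mathbf{W} = \boldsymbol\Sigma_{\mathbf{e}} + \boldsymbol\Sigma_{\boldsymbol\eta}$ and $\boldsymbol\Psi = \boldsymbol\Gamma_q^T \mathbf{W}^{-1}\boldsymbol\Gamma_q$. Define the reconstruction error $$\mathcal{R}_{\mathbf{W}}(\boldsymbol\Gamma_q,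 \mathbf{z}) = \big(\mathbf{z} - \boldsymbol\Gamma_q \boldsymbol\Psi^{-1}\boldsymbol\Gamma_q^T\mathbf{W}^{-1}\mathbf{z}\big)^T \mathbf{W}^{-1}\big(\mathbf{z} - \boldsymbol\Gamma_q \boldsymbol\Psi^{-1}\boldsymbol\Gamma_q^T\mathbf{W}^{-1}\mathbf{z}\big),$$ the projected quantities $\mathbf{c}(\mathbf{z}) = \boldsymbol\Psi^{-1}\boldsymbol\Gamma_q^T\mathbf{W}^{-1}\mathbf{z}$, $\mathrm{Var}[\mathbf{c}(\mathbf{e})] = \boldsymbol\Psi^{-1}\boldsymbol\Gamma_q^T\mathbf{W}^{-1}\boldsymbol\Sigma_{\mathbf{e}}\mathbf{W}^{-1}\boldsymbol\Gamma_q\boldsymbol\Psi^{-T}$, $\mathrm{Var}[\mathbf{c}(\boldsymbol\eta)] = \boldsymbol\Psi^{-1}\boldsymbol\Gamma_q^T\mathbf{W}^{-1}\boldsymbol\Sigma_{\boldsymbol\eta}\mathbf{W}^{-1}\boldsymbol\Gamma_q\boldsymbol\Psi^{-T}$, and the coefficient implausibility $$\tilde{\mathcal{I}}_{\mathbf{W}}(\mathbf{x}) = (\mathbf{c}(\mathbf{z}) - \mathrm{E}[\mathbf{c}(\mathbf{x})])^{T}\big(\mathrm{Var}[\mathbf{c}(\mathbf{x})] + \mathrm{Var}[\mathbf{c}(\mathbf{e})] + \mathrm{Var}[\mathbf{c}(\boldsymbol\eta)]\big)^{-1} (\mathbf{c}(\mathbf{z}) - \mathrm{E}[\mathbf{c}(\mathbf{x})]).$$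 Then $$\mathcal{I}(\mathbf{x}) = \mathcal{R}_{\mathbf{W}}(\boldsymbol\Gamma_q, \mathbf{z}) + \tilde{\mathcal{I}}_{\mathbf{W}}(\mathbf{x}).$$
   Context: This is the setting of history matching a computer model with $\ell$-dimensional output $f(\mathbf{x})$ emulated through coefficients on a $q$-dimensional basis $\boldsymbol\Gamma_q$ (columns are basis vectors), with statistical model $\mathbf{z} = f(\mathbf{x}^* ) + \boldsymbol\eta + \mathbf{e}$, where $\boldsymbol\eta$ and $\mathbf{e}$ are uncorrelated mean-zero terms with variances $\boldsymbol\Sigma_{\boldsymbol\eta}$ and $\boldsymbol\Sigma_{\mathbf{e}}$. All projections of $\ell$-dimensional quantities onto the basis are performed in the weighted norm with weight matrix $\mathbf{W}$, i.e. a vector $\mathbf{v}$ is projected to coefficients $(\boldsymbol\Gamma_q^T\mathbf{W}^{-1}\boldsymbol\Gamma_q)^{-1}\boldsymbol\Gamma_q^T\mathbf{W}^{-1}\mathbf{v}$. *)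

(* Defs.v *)
From HB Require Import structures.
From mathcomp Require Import all_boot all_order all_algebra.
Set Implicit Arguments. Unset Strict Implicit. Unset Printing Implicit Defensive.
Import Order.TTheory GRing.Theory Num.Theory.
Local Open Scope ring_scope.

Definition qform (R : ringType) (n : nat) (A : 'M[R]_n) (v : 'cV[R]_n) : R :=
  ((v^T *m A *m v) ord0 ord0).

Definition sym_mx (R : ringType) (n : nat) (A : 'M[R]_n) : Prop := A^T = A.

Definition posdef (R : numDomainType) (n : nat) (A : 'M[R]_n) : Prop :=
  sym_mx A /\ forall v : 'cV[R]_n, v != 0 -> 0 < qform A v.

Definition psd (R : numDomainType) (n : nat) (A : 'M[R]_n) : Prop :=
  sym_mx A /\ forall v : 'cV[R]_n, 0 <= qform A v.

Section HM.
Variables (R : realFieldType) (l q : nat).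
Variables (z : 'cV[R]_l) (G : 'M[R]_(l, q)) (Se Seta : 'M[R]_l)
          (Ec : 'cV[R]_q) (Vc : 'M[R]_q).

Definition Ef : 'cV[R]_l := G *m Ec.
Definition Vf : 'M[R]_l := G *m Vc *m G^T.

Definition field_impl : R := qform (invmx (Vf + Se + Seta)) (z - Ef).

Definition Wm : 'M[R]_l := Se + Seta.
Definition Psi : 'M[R]_q := G^T *m invmx Wm *m G.
Definition Pinv : 'M[R]_q := invmx Psi.

(* coefficients of z projected onto the basis in the W-weighted norm *)
Definition cz : 'cV[R]_q := Pinv *m G^T *m invmx Wm *m z.

Definition recon_err : R := qform (invmx Wm) (z - G *m cz).

Definition Vce : 'M[R]_q := Pinv *m G^T *m invmx Wm *m Se *m invmx Wm *m G *m Pinv^T.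
Definition Vceta : 'M[R]_q := Pinv *m G^T *m invmx Wm *m Seta *m invmx Wm *m G *m Pinv^T.

Definition coef_impl : R := qform (invmx (Vc + Vce + Vceta)) (cz - Ec).
End HM.

(* Main.v *)
Require Import Defs.
From HB Require Import structures.
From mathcomp Require Import all_boot all_order all_algebra.
Import Order.TTheory GRing.Theory Num.Theory.
Local Open Scope ring_scope.
Set Implicit Arguments.
Section L.
Variable R : realFieldType.

Lemma pd_unit n (A : 'M[R]_n) : posdef A -> A \in unitmx.
Proof.
move=> [_ hA]; rewrite -row_free_unit -kermx_eq0; apply: contraT => nk.
case: (pickP (fun i => row i (kermx A) != 0)) => [i hi | h]; last first.
  case/negP: nk; apply/eqP/row_matrixP => i; rewrite row0.
  by move/negbFE/eqP: (h i).
have := hA (row i (kermx A))^T; rewrite trmx_eq0 => /(_ hi).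
by rewrite /qform trmxK -row_mul mulmx_ker row0 mul0mx mxE ltxx.
Qed.

Lemma pd_inv n (A : 'M[R]_n) : posdef A -> posdef (invmx A).
Proof.
move=> hA; have uA := pd_unit hA; case: hA => sA hA; split.
  by rewrite /sym_mx trmx_inv sA.
move=> v nv; have [y vE ny] : exists2 y, v = A *m y & y != 0.
  exists (invmx A *m v); first by rewrite mulmxA mulmxV // mul1mx.
  by apply: contraNneq nv => y0; rewrite -[v]mul1mx -(mulmxV uA) -mulmxA y0 mulmx0.
have := hA y ny; rewrite /qform vE trmx_mul sA.
by rewrite -!mulmxA [invmx A *m (A *m y)]mulmxA mulVmx // mul1mx.
Qed.

Lemma qformD n (A B : 'M[R]_n) v : qform (A + B) v = qform A v + qform B v.
Proof. by rewrite /qform mulmxDr mulmxDl mxE. Qed.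

Lemma psd_pd_add n (A B : 'M[R]_n) : psd A -> posdef B -> posdef (A + B).
Proof.
move=> [sA hA] [sB hB]; split; first by rewrite /sym_mx linearD /= sA sB.
by move=> v nv; rewrite qformD; exact: ltr_wpDl (hA v) (hB v nv).
Qed.

Lemma pd_add n (A B : 'M[R]_n) : posdef A -> posdef B -> posdef (A + B).
Proof.
move=> [sA hA] hB; apply: psd_pd_add => //; split => // v.
have [->|nv] := eqVneq v 0; last exact: ltW (hA v nv).
by rewrite /qform mulmx0 mxE.
Qed.

Lemma psd_congr m n (A : 'M[R]_n) (G : 'M[R]_(m, n)) : psd A -> psd (G *m A *m G^T).
Proof.
move=> [sA hA]; split; first by rewrite /sym_mx !trmx_mul trmxK sA mulmxA.
move=> v; have := hA (G^T *m v); rewrite /qform trmx_mul trmxK.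
by rewrite !mulmxA.
Qed.

Lemma pd_congr m n (A : 'M[R]_m) (G : 'M[R]_(m, n)) :
  posdef A -> (forall v : 'cV[R]_n, G *m v = 0 -> v = 0) -> posdef (G^T *m A *m G).
Proof.
move=> [sA hA] hG; split; first by rewrite /sym_mx !trmx_mul trmxK sA mulmxA.
move=> v nv; have nGv : G *m v != 0 by apply/eqP => /hG /eqP; rewrite (negbTE nv).
have := hA _ nGv; rewrite /qform trmx_mul.
by rewrite !mulmxA.
Qed.
End L.
Unset Implicit Arguments.

Theorem theorem1 (R : realFieldType) (l q : nat) (hq : (0 < q)%N) (hql : (q <= l)%N)
  (z : 'cV[R]_l) (G : 'M[R]_(l, q)) (Se Seta : 'M[R]_l)
  (Ec : 'cV[R]_q) (Vc : 'M[R]_q)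
  (hG : \rank G = q) (hSe : posdef Se) (hSeta : posdef Seta) (hVc : psd Vc) :
  field_impl z G Se Seta Ec Vc =
  recon_err z G Se Seta + coef_impl z G Se Seta Ec Vc.
Proof.
rewrite /field_impl /recon_err /coef_impl /Vf /Ef /cz /Vce /Vceta /Pinv /Psi /Wm.
have hW : posdef (Se + Seta) := pd_add hSe hSeta.
have uW := pd_unit hW.
have hWi := pd_inv hW.
have symWi : (invmx (Se+Seta))^T = invmx (Se+Seta) := hWi.1.
have Gfree : forall v : 'cV[R]_q, G *m v = 0 -> v = 0.
  move=> v Gv; apply/eqP; rewrite -trmx_eq0 -(mulmx_free_eq0 _ (B:=G^T)).
    by rewrite -trmx_mul Gv trmx0.
  by rewrite /row_free mxrank_tr hG.
have hPsi : posdef (G^T *m invmx (Se+Seta) *m G) := pd_congr hWi Gfree.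
have uPsi := pd_unit hPsi.
have symPsi := hPsi.1.
have hPi := pd_inv hPsi.
set W := Se + Seta in uW hW hWi symWi hPsi uPsi symPsi hPi *.
set Wi := invmx W in hWi symWi hPsi uPsi symPsi hPi *.
set Ps := G^T *m Wi *m G in hPsi uPsi symPsi hPi *.
set Pi := invmx Ps in hPi *.
have symPi : Pi^T = Pi by rewrite /Pi trmx_inv symPsi.
have eV : Pi *m G^T *m Wi *m Se *m Wi *m G *m Pi^T
        + Pi *m G^T *m Wi *m Seta *m Wi *m G *m Pi^T = Pi.
  rewrite -!mulmxA -!mulmxDr -mulmxDl -/W.
  rewrite [Wi *m (W *m _)]mulmxA mulVmx // mul1mx.
  by rewrite !mulmxA -(mulmxA Pi) -(mulmxA Pi) -/Ps mulVmx // mul1mx symPi.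
rewrite -[Vc + _ + _]addrA eV.
have hM : posdef (G *m Vc *m G^T + W) := psd_pd_add (psd_congr G hVc) hW.
rewrite -[G *m Vc *m G^T + Se + Seta]addrA -/W.
have uM := pd_unit hM.
have hK : posdef (Vc + Pi) := psd_pd_add hVc hPi.
have uK := pd_unit hK.
set M := G *m Vc *m G^T + W in hM uM *.
set Mi := invmx M. set Ki := invmx (Vc + Pi).
set cz := Pi *m G^T *m Wi *m z.
set r := z - G *m cz. set d := cz - Ec.
have ha : G^T *m Wi *m r = 0.
  by rewrite /r mulmxBr /cz !mulmxA -/Ps mulmxV // mul1mx subrr.
have hb : Mi *m r = Wi *m r.
  have e : M *m (Wi *m r) = r.
    rewrite /M mulmxDl [W *m _]mulmxA mulmxV // mul1mx.
    by rewrite -!mulmxA [G^T *m (Wi *m r)]mulmxA ha !mulmx0 add0r.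
  by rewrite -{1}e [Mi *m (M *m _)]mulmxA mulVmx // mul1mx.
have PP : forall k (X : 'M_(q,k)), G^T *m (Wi *m (G *m (Pi *m X))) = X.
  by move=> k X; rewrite !mulmxA -/Ps mulmxV // mul1mx.
have hc : Mi *m (G *m d) = Wi *m G *m Pi *m (Ki *m d).
  have e : M *m (Wi *m G *m Pi *m (Ki *m d)) = G *m d.
    rewrite /M mulmxDl !mulmxA mulmxV // mul1mx -!mulmxA PP.
    rewrite -mulmxDr -mulmxDl.
    by rewrite /Ki [(Vc + Pi) *m _]mulmxA mulmxV // mul1mx.
  by rewrite -{1}e [Mi *m (M *m _)]mulmxA mulVmx // mul1mx.
have hx : z - G *m Ec = r + G *m d.
  by rewrite /r /d mulmxBr addrA subrK.
have rW : r^T *m Wi *m G = 0.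
  apply/eqP; rewrite -trmx_eq0 trmx_mul trmx_mul trmxK symWi mulmxA ha.
  by [].
suff E : (z - G *m Ec)^T *m Mi *m (z - G *m Ec) = r^T *m Wi *m r + d^T *m Ki *m d.
  by rewrite /qform E mxE.
rewrite hx -!mulmxA [Mi *m _]mulmxDr hb hc.
have -> : (r + G *m d)^T = r^T + d^T *m G^T.
  by rewrite -trmx_mul; apply/matrixP => i j; rewrite !mxE.
rewrite !mulmxDl -!mulmxA [r^T *m (_ + _)]mulmxDr [G^T *m (_ + _)]mulmxDr [d^T *m (_ + _)]mulmxDr [G^T *m (Wi *m r)]mulmxA ha mulmx0 PP.
rewrite [r^T *m (Wi *m (G *m _))]mulmxA [r^T *m Wi *m (G *m _)]mulmxA rW mul0mx.
by rewrite addr0 add0r.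
Qed.
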